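(* A pro-$p$ group $G$ is Frattini-resistant if and only if for all finitely generated subgroups $H$ and $K$ of $G$, $\Phi(H)\le\Phi(K)$ implies $H\le K$.
   Context: $p$ is a prime; subgroups are closed; $\Phi(H)$ is the Frattini subgroup. A triple $(G,K,H)$ of pro-$p$ groups with $H\le K\le G$ is hierarchical if $x\in G$, $x^p\in H$ imply $x\in K$. $G$ is Frattini-resistant if $(G,H,\Phi(H))$ is hierarchical for every finitely generated subgroup $H$ of $G$. *)

(* Defs.v *)
From HB Require Import structures.
From mathcomp Require Import all_boot all_order all_algebra.
From mathcomp Require Import all_classical all_reals all_analysis.

Set Implicit Arguments.
Unset Strict Implicit.
Unset Printing Implicit Defensive.

Local Open Scope classical_set_scope.

Record group_law (T : Type) := GroupLaw {
  gmul : T -> T -> T;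
  ginv : T -> T;
  gone : T;
  gmulA : forall x y z, gmul x (gmul y z) = gmul (gmul x y) z;
  gmul1 : forall x, gmul gone x = x;
  gmulV : forall x, gmul (ginv x) x = gone
}.

Section Defs.
Variables (T : topologicalType) (L : group_law T).

Local Notation "x * y" := (gmul L x y).
Local Notation "x ^-1" := (ginv L x).
Local Notation "1" := (gone L).

Fixpoint gpow (x : T) (n : nat) : T :=
  match n with 0 => 1 | n'.+1 => x * gpow x n' end.

Definition topological_group : Prop :=
  continuous (fun z : T * T => z.1 * z.2) /\ continuous (ginv L).

Definition is_subgroup (H : set T) : Prop :=
  H 1 /\ (forall x y, H x -> H y -> H (x * y)) /\ (forall x, H x -> H (x^-1)).

(* subgroup in the sense of the paper: closed subgroup *)
Definition closed_subgroup (H : set T) : Prop := is_subgroup H /\ closed H.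

Definition normal_subgroup (N : set T) : Prop :=
  is_subgroup N /\ forall x y, N y -> N (x^-1 * (y * x)).

(* the quotient T / N is finite of order m: there are m representatives
   of pairwise distinct left cosets covering T *)
Definition quotient_order (N : set T) (m : nat) : Prop :=
  exists s : seq T, size s = m /\
    (forall x, exists2 i, (i < m)%N & N ((nth 1 s i)^-1 * x)) /\
    (forall i j, (i < m)%N -> (j < m)%N -> N ((nth 1 s i)^-1 * nth 1 s j) -> i = j).

Definition pro_p_group (p : nat) : Prop :=
  [/\ topological_group, compact [set: T], hausdorff_space T,
      totally_disconnected [set: T] &
      forall N, normal_subgroup N -> open N ->
        exists n, quotient_order N (p ^ n)%N].

Definition gen_subgroup (S : set T) : set T :=
  [set x | forall H, is_subgroup H -> S `<=` H -> H x].

Definition fg_subgroup (H : set T) : Prop :=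
  closed_subgroup H /\
  exists s : seq T, H = closure (gen_subgroup [set x | x \in s]).

Definition maximal_open_subgroup (H M : set T) : Prop :=
  [/\ is_subgroup M, M `<=` H, M <> H,
      (exists U : set T, open U /\ M = U `&` H) &
      forall K, is_subgroup K -> M `<=` K -> K `<=` H -> K = M \/ K = H].

Definition Frattini (H : set T) : set T :=
  [set x | H x /\ forall M, maximal_open_subgroup H M -> M x].

(* (G, K, H) hierarchical, G being the whole group T *)
Definition hierarchical (p : nat) (K H : set T) : Prop :=
  forall x : T, H (gpow x p) -> K x.

Definition Frattini_resistant (p : nat) : Prop :=
  forall H, fg_subgroup H -> hierarchical p H (Frattini H).

End Defs.

(* Main.v *)
Require Import Defs.
From mathcomp Require Import all_boot all_order all_algebra.
From mathcomp Require Import all_classical all_reals all_analysis.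
From mathcomp Require Import all_fingroup all_solvable.
Require Import Defs.
Set Implicit Arguments.
Unset Strict Implicit.
Unset Printing Implicit Defensive.
Local Open Scope classical_set_scope.


Section GroupAlg.
Variables (T : Type) (L : group_law T).
Local Notation m := (gmul L).
Local Notation iv := (ginv L).
Local Notation e := (gone L).

Lemma LmulKg x y : m (iv x) (m x y) = y.
Proof. by rewrite (gmulA L) (gmulV L) (gmul1 L). Qed.

Lemma LmulgVr x : m x (iv x) = e.
Proof.
transitivity (m (iv (iv x)) (m (iv x) (m x (iv x)))); first by rewrite LmulKg.
by rewrite (gmulA L (iv x)) (gmulV L) (gmul1 L) (gmulV L).
Qed.

Lemma Lmulg1r x : m x e = x.
Proof. by rewrite -(gmulV L x) (gmulA L) LmulgVr (gmul1 L). Qed.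

Lemma LmulKVg x y : m x (m (iv x) y) = y.
Proof. by rewrite (gmulA L) LmulgVr (gmul1 L). Qed.

Lemma LmulgK x y : m (m y x) (iv x) = y.
Proof. by rewrite -(gmulA L) LmulgVr Lmulg1r. Qed.

Lemma LmulgKV x y : m (m y (iv x)) x = y.
Proof. by rewrite -(gmulA L) (gmulV L) Lmulg1r. Qed.

Lemma LmulgI x y z : m x y = m x z -> y = z.
Proof. by move=> h; rewrite -(LmulKg x y) h LmulKg. Qed.

Lemma LmulIg x y z : m y x = m z x -> y = z.
Proof. by move=> h; rewrite -(LmulgK x y) h LmulgK. Qed.

Lemma LinvgK x : iv (iv x) = x.
Proof. by apply: (@LmulIg (iv x)); rewrite (gmulV L) LmulgVr. Qed.

Lemma LinvgM x y : iv (m x y) = m (iv y) (iv x).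
Proof.
apply: (@LmulgI (m x y)); rewrite LmulgVr -(gmulA L) (gmulA _ y) LmulgVr (gmul1 L).
by rewrite LmulgVr.
Qed.

Lemma Linvg1 : iv e = e.
Proof. by rewrite -[iv e]Lmulg1r (gmulV L). Qed.

Lemma Linvg_eq1 x y : m x (iv y) = e -> x = y.
Proof. by move=> h; rewrite -(LmulgKV y x) h (gmul1 L). Qed.
End GroupAlg.

Section Pow.
Variables (T : topologicalType) (L : group_law T).
Local Notation m := (gmul L).
Local Notation iv := (ginv L).
Local Notation e := (gone L).
Local Notation gp := (gpow L).

Lemma gpowD x a b : gp x (a + b) = m (gp x a) (gp x b).
Proof. by elim: a => [|a IH] /=; rewrite ?(gmul1 L) // IH (gmulA L). Qed.

Lemma gpowSr x n : gp x n.+1 = m (gp x n) x.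
Proof. by rewrite -addn1 gpowD /= Lmulg1r. Qed.

Lemma gpowM x a b : gp x (a * b) = gp (gp x a) b.
Proof. by elim: b => [|b IH]; rewrite ?muln0 // mulnS gpowD IH. Qed.

Lemma gpowC x a b : m (gp x a) (gp x b) = m (gp x b) (gp x a).
Proof. by rewrite -!gpowD addnC. Qed.

Lemma gpow1 x : gp x 1 = x.
Proof. by rewrite /= Lmulg1r. Qed.

Lemma subgroup_pow H x n : is_subgroup L H -> H x -> H (gp x n).
Proof.
move=> [H1 [HM HV]] Hx; elim: n => [|n IH] //=; exact: HM.
Qed.

Lemma subgroup_div H x y : is_subgroup L H -> H x -> H y -> H (m x (iv y)).
Proof. by move=> [H1 [HM HV]] Hx Hy; apply: HM => //; apply: HV. Qed.

Lemma gen_sub S H : is_subgroup L H -> S `<=` H -> gen_subgroup L S `<=` H.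
Proof. by move=> sH SH x; apply. Qed.

Lemma gen_subgroupP S : is_subgroup L (gen_subgroup L S).
Proof.
split; first by move=> H [].
split; first by move=> x y Hx Hy H sH SH; case: (sH) => _ [HM _]; apply: HM; [apply: Hx|apply: Hy].
by move=> x Hx H sH SH; case: (sH) => _ [_ HV]; apply: HV; apply: Hx.
Qed.

Lemma gen_subset S : S `<=` gen_subgroup L S.
Proof. by move=> x Sx H _; apply. Qed.

End Pow.


Section Topo.
Variables (T : topologicalType) (L : group_law T).
Hypothesis TG : topological_group L.
Local Notation m := (gmul L).
Local Notation iv := (ginv L).
Local Notation e := (gone L).
Local Notation gp := (gpow L).

Lemma cont_mul2 (a b : T) (B : set T) : nbhs (m a b) B ->
  exists P Q, [/\ nbhs a P, nbhs b Q & forall x y, P x -> Q y -> B (m x y)].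
Proof.
move=> nB; case: (TG.1 (a, b) B nB) => [[P Q]] /= [Pa Qb] PQ.
by exists P, Q; split => // x y Px Qy; apply: (PQ (x, y)).
Qed.

Lemma cont_lmul g : continuous (m g).
Proof.
move=> y B nB; case: (cont_mul2 nB) => P [Q [Pg Qy PQ]].
by apply: filterS Qy => z Qz; apply: PQ => //; apply: nbhs_singleton.
Qed.

Lemma cont_rmul g : continuous (fun y => m y g).
Proof.
move=> y B nB; case: (cont_mul2 nB) => P [Q [Py Qg PQ]].
by apply: filterS Py => z Pz; apply: PQ => //; apply: nbhs_singleton.
Qed.

Lemma cont_inv : continuous iv.
Proof. exact: TG.2. Qed.

Lemma open_lmul g U : open U -> open [set y | U (m g y)].
Proof. by move=> oU; have := (continuousP (m g)).1 (@cont_lmul g) U oU. Qed.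

Lemma closed_lmul g U : closed U -> closed [set y | U (m g y)].
Proof. by move=> oU; have := (continuous_closedP (m g)).1 (@cont_lmul g) U oU. Qed.

Lemma open_rmul g U : open U -> open [set y | U (m y g)].
Proof. by move=> oU; have := (continuousP _).1 (@cont_rmul g) U oU. Qed.

Lemma closure_subgroup S : is_subgroup L S -> is_subgroup L (closure S).
Proof.
move=> [S1 [SM SV]]; split; first exact: subset_closure.
split.
  move=> a b ca cb B nB; case: (cont_mul2 nB) => P [Q [Pa Qb PQ]].
  case: (ca P Pa) => s1 [Ss1 Ps1]; case: (cb Q Qb) => s2 [Ss2 Qs2].
  by exists (m s1 s2); split; [apply: SM|apply: PQ].
move=> a ca B nB; have := cont_inv nB => /= nB'.
case: (ca _ nB') => s [Ss Bs]; exists (iv s); split => //; exact: SV.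
Qed.

Lemma closure_min (S C : set T) : closed C -> S `<=` C -> closure S `<=` C.
Proof. by move=> cC SC; apply: subset_trans (closureS SC) _; exact: cC. Qed.

Lemma subgroup_nbhs_open S : is_subgroup L S -> nbhs e S -> open S.
Proof.
move=> sS nS; rewrite openE => s Ss; rewrite /interior /=.
have h : (m (iv s)) @ s --> e by rewrite -(gmulV L s); exact: cont_lmul.
apply: (@filterS _ _ _ (m (iv s) @^-1` S)); last exact: (h S nS).
move=> y /= Sy.
by rewrite -(LmulKVg L s y); case: sS => _ [SM _]; apply: SM.
Qed.

Lemma open_in_closed H M U : closed H -> is_subgroup L H -> is_subgroup L M ->
  M `<=` H -> open U -> M = U `&` H -> closed M.
Proof.
move=> cH sH sM MH oU MUH.
pose V := [set y | exists h, [/\ H h, ~ M h & U (m (iv h) y)]].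
have oV : open V.
  rewrite openE => y [h [Hh NMh Uy]].
  apply: (@filterS _ _ _ [set z | U (m (iv h) z)]).
    by move=> z Uz; exists h.
  by apply: open_nbhs_nbhs; split => //; apply: open_lmul.
have -> : M = H `&` ~` V.
  apply/seteqP; split.
    move=> y My; split; first exact: MH.
    move=> [h [Hh NMh Uh]]; apply: NMh.
    have Hu : H (m (iv h) y).
      by case: sH => _ [HM HV]; apply: HM; [apply: HV|apply: MH].
    have Mu : M (m (iv h) y) by rewrite MUH.
    have -> : h = m y (iv (m (iv h) y)).
      by rewrite (LinvgM L) (LinvgK L) (LmulKVg L).
    exact: subgroup_div.
  move=> y [Hy NVy]; apply: contrapT => NMy; apply: NVy; exists y; split => //.
  rewrite (gmulV L).
  have : M e by case: sM.
  by rewrite MUH => -[].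
by apply: closedI => //; apply: open_closedC.
Qed.

End Topo.


Section Cyc.
Variables (T : topologicalType) (L : group_law T).
Hypothesis TG : topological_group L.
Variable p : nat.
Hypothesis pp : prime p.
Local Notation m := (gmul L).
Local Notation iv := (ginv L).
Local Notation e := (gone L).
Local Notation gp := (gpow L).

Definition gen1 (x : T) := gen_subgroup L [set y | y \in [:: x]].
Definition cyc (x : T) := closure (gen1 x).

Lemma gen1_sub x K : is_subgroup L K -> K x -> gen1 x `<=` K.
Proof. by move=> sK Kx; apply: gen_sub => // z; rewrite /= inE => /eqP ->. Qed.

Lemma gen1_x x : gen1 x x.
Proof. by apply: gen_subset; rewrite /= inE. Qed.

Lemma cyc_subgroup x : is_subgroup L (cyc x).
Proof. exact: (closure_subgroup TG (gen_subgroupP _ _)). Qed.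

Lemma cyc_closed x : closed (cyc x).
Proof. exact: closed_closure. Qed.

Lemma cyc_x x : cyc x x.
Proof. by apply: subset_closure; apply: gen1_x. Qed.

Lemma cyc_min x K : closed K -> is_subgroup L K -> K x -> cyc x `<=` K.
Proof. by move=> cK sK Kx; apply: closure_min => //; apply: gen1_sub. Qed.

Lemma cyc_fg x : fg_subgroup L (cyc x).
Proof.
split; first by split; [apply: cyc_subgroup|apply: cyc_closed].
by exists [:: x].
Qed.

Lemma bezout_pow K x i : is_subgroup L K -> K (gp x p) -> K (gp x i) ->
  (0 < i < p)%N -> K x.
Proof.
move=> sK Kp Ki /andP[i0 ip].
have cop : coprime i p.
  rewrite coprime_sym prime_coprime //; apply/negP => /(dvdn_leq i0).
  by rewrite leqNgt ip.
case: (egcdnP p i0) => km kn E _.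
rewrite (eqP cop) in E.
have h1 : K (gp x (km * i)) by rewrite mulnC gpowM; apply: (subgroup_pow _ sK).
have h2 : K (gp x (kn * p)) by rewrite mulnC gpowM; apply: (subgroup_pow _ sK).
rewrite E gpowD gpow1 in h1.
by rewrite -(LmulKg L (gp x (kn * p)) x); case: sK => _ [KM KV]; apply: KM => //; apply: KV.
Qed.

Definition Zset x := [set y | exists n k, y = m (gp x n) (iv (gp x k))].

Lemma gp_inv_mul x b c :
  m (iv (gp x b)) (gp x c) = m (gp x (c - b)) (iv (gp x (b - c))).
Proof.
case: (leqP b c) => bc.
  have -> : (b - c = 0)%N by apply/eqP; rewrite subn_eq0.
  rewrite [gp x 0]/= (Linvg1 L) (Lmulg1r L).
  have {1}-> : c = (b + (c - b))%N by rewrite subnKC.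
  by rewrite gpowD (LmulKg L).
have -> : (c - b = 0)%N by apply/eqP; rewrite subn_eq0 ltnW.
rewrite [gp x 0]/= (gmul1 L).
have {1}-> : b = (c + (b - c))%N by rewrite subnKC // ltnW.
by rewrite gpowD (LinvgM L) -(gmulA L) (gmulV L) (Lmulg1r L).
Qed.

Lemma Zset_subgroup x : is_subgroup L (Zset x).
Proof.
split; first by rewrite /Zset /=; exists 0%N, 0%N; rewrite /= (Linvg1 L) (gmul1 L).
split.
  move=> _ _ [a [b ->]] [c [d ->]].
  rewrite /Zset /=; exists (a + (c - b))%N, (d + (b - c))%N.
  rewrite -(gmulA L) (gmulA L (iv _)) gp_inv_mul -!(gmulA L) -(LinvgM L).
  by rewrite (gmulA L) -!gpowD.
move=> _ [n [k ->]]; rewrite /Zset /=; exists k, n.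
by rewrite (LinvgM L) (LinvgK L).
Qed.

Lemma gen1_Zset x : gen1 x `<=` Zset x.
Proof.
apply: gen1_sub; first exact: Zset_subgroup.
by rewrite /Zset /=; exists 1%N, 0%N; rewrite gpow1 /= (Linvg1 L) (Lmulg1r L).
Qed.

Definition Dset x (P : nat -> bool) n :=
  [set y | exists i, [/\ (i < n)%N, P i & cyc (gp x p) (m (iv (gp x i)) y)]].

Lemma Dset_closed x P n : closed (Dset x P n).
Proof.
elim: n => [|n IH].
  have -> : Dset x P 0 = set0 by apply/seteqP; split => // y [i []].
  exact: closed0.
have -> : Dset x P n.+1 = Dset x P n `|`
   [set y | P n /\ cyc (gp x p) (m (iv (gp x n)) y)].
  apply/seteqP; split.
    move=> y [i [+ Pi Ci]]; rewrite ltnS leq_eqVlt => /orP[/eqP ein|lin].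
      by right; rewrite -ein.
    by left; exists i.
  move=> y [[i [lin Pi Ci]]|[Pn Cn]]; first by exists i; split => //; apply: ltnW.
  by exists n.
apply: closedU => //.
case: (boolP (P n)) => Pn.
  have -> : [set y | true /\ cyc (gp x p) (m (iv (gp x n)) y)] =
     [set y | cyc (gp x p) (m (iv (gp x n)) y)].
    by apply/seteqP; split => y //= [].
  by apply: (closed_lmul TG); apply: cyc_closed.
have -> : [set y | false /\ cyc (gp x p) (m (iv (gp x n)) y)] = set0.
  by apply/seteqP; split => y //= [].
exact: closed0.
Qed.

Lemma cyc_cosets x : cyc x `<=` Dset x predT p.
Proof.
have p0 := prime_gt0 pp.
apply: closure_min; first exact: Dset_closed.
move=> y /gen1_Zset [n [k ->]].
set N := (n + (p - 1) * k)%N.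
have E : m (gp x n) (iv (gp x k)) = m (gp x N) (iv (gp (gp x p) k)).
  rewrite /N -gpowM gpowD -(gmulA L); congr (m _ _).
  have -> : (p * k = k + (p - 1) * k)%N.
    by rewrite mulnBl mul1n subnKC // leq_pmull.
  by rewrite gpowD (LinvgM L) (LmulKVg L).
exists (N %% p)%N; split => //; first by rewrite ltn_mod.
rewrite E.
have -> : gp x N = m (gp x (N %% p)) (gp (gp x p) (N %/ p)).
  by rewrite {1}(divn_eq N p) addnC gpowD mulnC gpowM.
rewrite -(gmulA L) (LmulKg L).
have sC := cyc_subgroup (gp x p).
apply: (subgroup_div sC); apply: (subgroup_pow _ sC); exact: cyc_x.
Qed.

Lemma cyc_frattini x : Frattini L (cyc x) `<=` cyc (gp x p).
Proof.
have p0 := prime_gt0 pp.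
set A := cyc x; set C := cyc (gp x p).
have sC : is_subgroup L C := cyc_subgroup _.
have sA : is_subgroup L A := cyc_subgroup _.
have CA : C `<=` A.
  apply: cyc_min; [exact: cyc_closed|exact: sA|].
  apply: (subgroup_pow _ sA); exact: cyc_x.
have [Cx|NCx] := pselect (C x).
  move=> y [Ay _]; move: Ay; apply: cyc_min => //; exact: cyc_closed.
move=> y [Ay /(_ C)]; apply.
have Cp : C (gp x p) by apply: cyc_x.
have key : forall i, (0 < i < p)%N -> ~ C (gp x i).
  by move=> i ip Ci; apply: NCx; apply: (@bezout_pow C x i).
split => //.
- by move=> E; apply: NCx; rewrite E; apply: cyc_x.
- exists (~` Dset x (fun i => 0 < i)%N p); split.
    by apply: closed_openC; apply: Dset_closed.
  apply/seteqP; split.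
    move=> c Cc; split; last exact: CA.
    move=> [i [ip i0 Ci]]; apply: (key i); first by rewrite i0.
    have : C (iv (gp x i)).
      by rewrite -(LmulgK L c (iv (gp x i))); apply: (subgroup_div sC).
    by case: sC => _ [_ CV] /CV; rewrite (LinvgK L).
  move=> c [NDc Ac]; have [i [ip _ Ci]] := cyc_cosets Ac.
  case: (posnP i) => [i0|i0]; last by exfalso; apply: NDc; exists i.
  by move: Ci; rewrite i0 /= (Linvg1 L) (gmul1 L).
- move=> K sK CK KA.
  have [KC|NKC] := pselect (K `<=` C).
    by left; apply/seteqP; split.
  right; apply/seteqP; split => //.
  have [z [Kz NCz]] : exists z, K z /\ ~ C z.
    apply: contrapT => NE; apply: NKC => z Kz; apply: contrapT => NCz.
    by apply: NE; exists z.
  have [i [ip _ Ci]] := cyc_cosets (KA _ Kz).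
  have Kxi : K (gp x i).
    have -> : gp x i = m z (iv (m (iv (gp x i)) z)).
      by rewrite (LinvgM L) (LinvgK L) (LmulKVg L).
    by apply: (subgroup_div sK) => //; apply: CK.
  have i0 : (0 < i)%N.
    case: (posnP i) => // i0; exfalso; apply: NCz.
    by move: Ci; rewrite i0 /= (Linvg1 L) (gmul1 L).
  have Kx : K x by apply: (@bezout_pow K x i) => //; [apply: CK|rewrite i0].
  move=> a Aa; have [j [jp _ Cj]] := cyc_cosets Aa.
  rewrite -(LmulKVg L (gp x j) a); have [_ [KM _]] := sK; apply: KM; last exact: CK.
  by apply: (subgroup_pow _ sK).
Qed.

End Cyc.


Lemma dir_back (p : nat) (T : topologicalType) (L : group_law T) :
  topological_group L -> prime p ->
  (forall H K : set T, fg_subgroup L H -> fg_subgroup L K ->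
     Frattini L H `<=` Frattini L K -> H `<=` K) -> Frattini_resistant L p.
Proof.
move=> TG pp cond H fgH x Fx.
apply: (cond (cyc L x) H (cyc_fg TG x) fgH _ x (@cyc_x _ L x)).
apply: subset_trans (cyc_frattini TG pp (x:=x)) _.
have [[sH cH] _] := fgH.
move=> y Cy; split.
  by move: Cy; apply: cyc_min => //; case: Fx.
move=> M hM; have [sM MH _ [U [oU MUH]] _] := hM.
move: Cy; apply: cyc_min => //; last by case: Fx => _; apply.
exact: (open_in_closed TG cH sH sM MH oU MUH).
Qed.


Section ZeroDim.
Variable T : topologicalType.
Hypothesis cT : compact [set: T].
Hypothesis hT : hausdorff_space T.

Definition Qc (x : T) := [set z | forall C, clopen C -> C x -> C z].

Lemma Qc_closed x : closed (Qc x).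
Proof.
move=> z clz C [oC cC] Cx; apply: contrapT => NCz.
have nb : nbhs z (~` C) by apply: open_nbhs_nbhs; split => //; exact: closed_openC.
by case: (clz _ nb) => q [Qq NCq]; apply: NCq; apply: Qq.
Qed.

Lemma clopen_sep x (K : set T) : closed K -> (forall z, K z -> ~ Qc x z) ->
  exists C, [/\ clopen C, C x & C `&` K = set0].
Proof.
move=> cK NQ; apply: contrapT => Nex.
pose F := filter_from [set C | clopen C /\ C x] (fun C => C `&` K).
have FF : Filter F.
  apply: filter_from_filter; first by exists setT; split => //; exact: clopenT.
  move=> A B [cA Ax] [cB Bx]; exists (A `&` B); first by split; [exact: clopenI|].
  by move=> y [[Ay By] Ky].
have PF : ProperFilter F.
  apply: filter_from_proper => C [cC Cx]; apply/set0P/eqP => E; apply: Nex.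
  by exists C.
have cK' : compact K by apply: (subclosed_compact cK cT).
have FK : F K by exists setT; [split => //; exact: clopenT| move=> y []].
case: (cK' F PF FK) => z [Kz clz].
have [C [cC Cx NCz]] : exists C, [/\ clopen C, C x & ~ C z].
  apply: contrapT => NE; apply: (NQ z Kz) => C0 cC0 C0x.
  by apply: contrapT => NC0z; apply: NE; exists C0.
have nb : nbhs z (~` C).
  by apply: open_nbhs_nbhs; split => //; case: cC => _ ?; exact: closed_openC.
have FC : F (C `&` K) by exists C.
by case: (clz _ _ FC nb) => y [[Cy _] NCy].
Qed.

Lemma sep_closed (A B : set T) : closed A -> closed B -> A `&` B = set0 ->
  exists U V, [/\ open U, open V, A `<=` U, B `<=` V & U `&` V = set0].
Proof.
move=> cA cB AB.
have nA : set_nbhs A (~` B).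
  apply/set_nbhsP; exists (~` B); split => //; first exact: closed_openC.
  by move=> a Aa Ba; have : (A `&` B) a by []; rewrite AB.
case: (compact_normal hT cT cA nA) => W /set_nbhsP [C [oC AC CW]] clW.
exists C, (~` closure W); split => //.
- exact/closed_openC/closed_closure.
- by move=> b Bb clb; apply: (clW b clb).
- apply/seteqP; split => // y [Cy NCy]; apply: NCy; apply: subset_closure.
  exact: CW.
Qed.

Lemma clopen_part (C U V : set T) : clopen C -> open U -> open V ->
  C `<=` U `|` V -> U `&` V = set0 -> clopen (C `&` U).
Proof.
move=> [oC cC] oU oV CUV UV; split; first exact: openI.
have -> : C `&` U = C `&` ~` V.
  apply/seteqP; split => y [Cy Hy]; split => //.
    by move=> Vy; have : (U `&` V) y by []; rewrite UV.
  by case: (CUV y Cy).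
by apply: closedI => //; exact: open_closedC.
Qed.

Lemma Qc_connected x : connected (Qc x).
Proof.
move=> B [b Bb] [C oC BQC] [D cD BQD].
have Qx : Qc x x by [].
have cQ := @Qc_closed x.
have cA1 : closed B by rewrite BQD; exact: closedI.
have cA2 : closed (Qc x `&` ~` C) by apply: closedI => //; exact: open_closedC.
have dis : B `&` (Qc x `&` ~` C) = set0.
  by apply/seteqP; split => // y [By [_ NCy]]; move: By; rewrite BQC => -[].
have [U1 [U2 [oU1 oU2 BU1 A2U2 U12]]] := sep_closed cA1 cA2 dis.
have QU : Qc x `<=` U1 `|` U2.
  move=> q Qq; have [Cq|NCq] := pselect (C q).
    by left; apply: BU1; rewrite BQC.
  by right; apply: A2U2.
have [C0 [cC0 C0x C0K]] : exists C0, [/\ clopen C0, C0 x & C0 `&` ~` (U1 `|` U2) = set0].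
  apply: clopen_sep; first by apply: open_closedC; exact: openU.
  by move=> z NUz Qz; apply: NUz; apply: QU.
have C0U : C0 `<=` U1 `|` U2.
  move=> y C0y; apply: contrapT => NU.
  by have : (C0 `&` ~` (U1 `|` U2)) y by []; rewrite C0K.
have [Cx|NCx] := pselect (C x).
  have Bx : B x by rewrite BQC.
  have cl := clopen_part cC0 oU1 oU2 C0U U12.
  have QU1 : Qc x `<=` U1.
    move=> q Qq; have : (C0 `&` U1) q by apply: Qq cl _; split => //; exact: BU1.
    by case.
  apply/seteqP; split; first by rewrite BQC => y [].
  move=> q Qq; rewrite BQC; split => //; apply: contrapT => NCq.
  have : (U1 `&` U2) q by split; [exact: QU1|exact: A2U2].
  by rewrite U12.
have cl : clopen (C0 `&` U2).
  by apply: (clopen_part cC0 oU2 oU1); [rewrite setUC|rewrite setIC].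
have QU2 : Qc x `<=` U2.
  move=> q Qq; have : (C0 `&` U2) q by apply: Qq cl _; split => //; exact: A2U2.
  by case.
exfalso; have : (U1 `&` U2) b by split; [exact: BU1|apply: QU2; move: Bb; rewrite BQC => -[]].
by rewrite U12.
Qed.

Hypothesis tdT : totally_disconnected [set: T].

Lemma clopen_nbhs x (U : set T) : open U -> U x ->
  exists C, [/\ clopen C, C x & C `<=` U].
Proof.
move=> oU Ux.
have [C [cC Cx CK]] : exists C, [/\ clopen C, C x & C `&` ~` U = set0].
  apply: clopen_sep; first exact: open_closedC.
  move=> z NUz Qz; apply: NUz.
  have : connected_component [set: T] x z.
    by exists (Qc x) => //; split => //; exact: Qc_connected.
  by rewrite (tdT (x:=x)) // => ->.
exists C; split => // y Cy; apply: contrapT => NUy.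
by have : (C `&` ~` U) y by []; rewrite CK.
Qed.

End ZeroDim.


Section OpenNormal.
Variables (T : topologicalType) (L : group_law T).
Hypothesis TG : topological_group L.
Hypothesis cT : compact [set: T].
Local Notation m := (gmul L).
Local Notation iv := (ginv L).
Local Notation e := (gone L).

Lemma open_subgroup_in (V : set T) : clopen V -> V e ->
  exists S, [/\ is_subgroup L S, open S & S `<=` V].
Proof.
move=> [oV cV] Ve.
have cpV : compact V by apply: (subclosed_compact cV cT).
have hW : \forall i \near e, forall v, V v -> V (m v i).
  apply: ((compact_near_coveringP V).1 cpV T (nbhs e) (fun i v => V (m v i))).
  move=> v Vv.
  have nb : nbhs (m v e) V by rewrite (Lmulg1r L); apply: open_nbhs_nbhs.
  have [P [Q [Pv Qe PQ]]] := cont_mul2 TG nb.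
  by exists (P, Q) => //= -[a b] /= [Pa Qb]; apply: PQ.
pose S := [set g | forall v, V v -> V (m v g) /\ V (m v (iv g))].
have sS : is_subgroup L S.
  split; first by move=> v Vv; rewrite (Linvg1 L) (Lmulg1r L).
  split.
    move=> a b Sa Sb v Vv; split.
      by rewrite (gmulA L); apply: (Sb _ (Sa _ Vv).1).1.
    by rewrite (LinvgM L) (gmulA L); apply: (Sa _ (Sb _ Vv).2).2.
  by move=> a Sa v Vv; rewrite (LinvgK L); split; [apply: (Sa _ Vv).2|apply: (Sa _ Vv).1].
have nS : nbhs e S.
  have ni : nbhs e (iv @^-1` [set i | forall v, V v -> V (m v i)]).
    by apply: (cont_inv TG); rewrite (Linvg1 L).
  apply: filterS (filterI hW ni) => g [W0g W0ig] v Vv.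
  by split; [apply: W0g|apply: W0ig].
exists S; split => //; first exact: (subgroup_nbhs_open TG).
by move=> g Sg; have := (Sg e Ve).1; rewrite (gmul1 L).
Qed.

Lemma normal_core (W : set T) : is_subgroup L W -> open W ->
  exists N, [/\ normal_subgroup L N, open N & N `<=` W].
Proof.
move=> sW oW.
pose N := [set y | forall t, W (m (iv t) (m y t))].
have sN : is_subgroup L N.
  split; first by move=> t; rewrite (gmul1 L) (gmulV L); case: sW.
  split.
    move=> a b Na Nb t.
    have -> : m (iv t) (m (m a b) t) = m (m (iv t) (m a t)) (m (iv t) (m b t)).
      by rewrite !(gmulA L) (LmulgK L).
    by case: sW => _ [WM _]; apply: WM.
  move=> a Na t.
  have -> : m (iv t) (m (iv a) t) = iv (m (iv t) (m a t)).
    by rewrite !(LinvgM L) (LinvgK L) (gmulA L).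
  by case: sW => _ [_ WV]; apply: WV.
have nN : nbhs e N.
  have hN : \forall y \near e, forall t, setT t -> W (m (iv t) (m y t)).
    apply: ((compact_near_coveringP _).1 cT T (nbhs e) (fun y t => W (m (iv t) (m y t)))).
    move=> t _.
    have nb : nbhs (m (iv t) (m e t)) W.
      by rewrite (gmul1 L) (gmulV L); apply: open_nbhs_nbhs; split => //; case: sW.
    have [P1 [Q1 [P1t Q1t PQ1]]] := cont_mul2 TG nb.
    have [P2 [Q2 [P2e Q2t PQ2]]] := cont_mul2 TG Q1t.
    have nP1 : nbhs t (iv @^-1` P1) by apply: (cont_inv TG).
    exists (Q2 `&` iv @^-1` P1, P2); first by split => //=; apply: filterI.
    by move=> [a b] /= [[Q2a P1a] P2b]; apply: PQ1 => //; apply: PQ2.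
  by apply: filterS hN => y W0y t; exact: W0y.
exists N; split.
- split => // x y Ny t.
  have -> : m (iv t) (m (m (iv x) (m y x)) t) = m (iv (m x t)) (m y (m x t)).
    by rewrite (LinvgM L) !(gmulA L).
  exact: Ny.
- exact: (subgroup_nbhs_open TG).
- by move=> y Ny; have := Ny e; rewrite (Linvg1 L) (gmul1 L) (Lmulg1r L).
Qed.

End OpenNormal.


Section FinPart.
Variables (T : topologicalType) (L : group_law T) (N : set T) (k : nat) (s : seq T).
Local Notation m := (gmul L).
Local Notation iv := (ginv L).
Local Notation e := (gone L).
Local Notation gp := (gpow L).
Hypothesis sN : normal_subgroup L N.
Hypothesis cov : forall x, exists2 i, (i < k)%N & N (m (iv (nth e s i)) x).
Hypothesis dis : forall i j, (i < k)%N -> (j < k)%N ->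
  N (m (iv (nth e s i)) (nth e s j)) -> i = j.

Let sN' : is_subgroup L N := sN.1.

Lemma NL3 a b : N (m (iv a) b) -> N (m (iv b) a).
Proof.
move=> h; have [_ [_ NV]] := sN'; have := NV _ h.
by rewrite (LinvgM L) (LinvgK L).
Qed.

Lemma NLt a b c : N (m (iv a) b) -> N (m (iv b) c) -> N (m (iv a) c).
Proof.
move=> h1 h2; have [_ [NM _]] := sN'; have := NM _ _ h1 h2.
by rewrite -(gmulA L) (LmulKVg L).
Qed.

Definition sr (i : 'I_k) := nth e s i.

Lemma cov' x : exists i : 'I_k, N (m (iv (sr i)) x).
Proof. by case: (cov x) => i ik Ni; exists (Ordinal ik). Qed.

Definition idx x : 'I_k := proj1_sig (cid (cov' x)).

Lemma idx_spec x : N (m (iv (sr (idx x))) x).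
Proof. exact: (proj2_sig (cid (cov' x))). Qed.

Lemma idx_uniq (i : 'I_k) x : N (m (iv (sr i)) x) -> idx x = i.
Proof.
move=> h; apply: val_inj; apply: dis; [exact: ltn_ord|exact: ltn_ord|].
exact: (NLt (idx_spec x) (NL3 h)).
Qed.

Lemma idx_eq y z : N (m (iv y) z) -> idx y = idx z.
Proof. by move=> h; apply/esym/idx_uniq; exact: (NLt (idx_spec y) h). Qed.

Definition fphi g (i : 'I_k) := idx (m g (sr i)).

Lemma fphi_inj g : injective (fphi g).
Proof.
move=> i j h; apply: val_inj; apply: dis; [exact: ltn_ord|exact: ltn_ord|].
have h1 := idx_spec (m g (sr i)); have h2 := idx_spec (m g (sr j)).
rewrite /fphi in h; rewrite h in h1.
have := NLt (NL3 h1) h2.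
by rewrite (LinvgM L) -(gmulA L) (LmulKg L).
Qed.

Definition phi g : {perm 'I_k} := perm (@fphi_inj g).

Lemma phiE g i : phi g i = idx (m g (sr i)).
Proof. by rewrite permE. Qed.

Lemma phiM a b : phi (m a b) = (phi b * phi a)%g.
Proof.
apply/permP => i; rewrite permM !phiE; apply: idx_eq.
have h := NL3 (idx_spec (m b (sr i))).
by rewrite -(gmulA L) (LinvgM L) -(gmulA L) (LmulKg L).
Qed.

Lemma phiN g : N g -> phi g = 1%g.
Proof.
move=> Ng; apply/permP => i; rewrite phiE perm1; apply: idx_uniq.
exact: sN.2.
Qed.

Lemma phi1 : phi e = 1%g.
Proof. by apply: phiN; case: sN'. Qed.

Lemma phiV a : phi (iv a) = (phi a)^-1%g.
Proof.
apply/eqP; rewrite eq_sym eq_invg_mul -phiM (gmulV L) phi1 //.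
Qed.

Lemma phi_ker g : phi g = 1%g -> N g.
Proof.
move=> h; set i0 := idx e.
have N0 : N (sr i0).
  have := idx_spec e; rewrite (Lmulg1r L) => /(sN'.2.2); by rewrite (LinvgK L).
have h0 : phi g i0 = i0 by rewrite h perm1.
rewrite phiE in h0.
have h1 := idx_spec (m g (sr i0)); rewrite h0 in h1.
have := sN.2 (iv (sr i0)) _ h1.
by rewrite (LinvgK L) (gmulA L) (LmulKVg L) (LmulgK L).
Qed.

Lemma phi_eqP a b : phi a = phi b -> N (m (iv a) b).
Proof. by move=> h; apply: phi_ker; rewrite phiM phiV h mulgV. Qed.

Lemma phi_coset a b : N (m (iv a) b) -> phi a = phi b.
Proof.
move=> h; rewrite -[b](LmulKVg L a) phiM (phiN h) mul1g //.
Qed.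

Lemma phiX h n : phi (gp h n) = (phi h ^+ n)%g.
Proof.
elim: n => [|n IH] /=; first by rewrite phi1.
by rewrite phiM IH expgSr.
Qed.

Definition img (X : set T) : {set {perm 'I_k}} :=
  [set σ | `[< exists g, X g /\ phi g = σ >]].

Lemma mem_img X σ : (σ \in img X) <-> exists g, X g /\ phi g = σ.
Proof. by rewrite inE; split => [/asboolP|?]; [|apply/asboolP]. Qed.

Lemma img_phi X g : X g -> phi g \in img X.
Proof. by move=> Xg; apply/mem_img; exists g. Qed.

Lemma img_group X : is_subgroup L X -> group_set (img X).
Proof.
move=> [X1 [XM XV]]; apply/group_setP; split.
  by apply/mem_img; exists e; split => //; exact: phi1.
move=> _ _ /mem_img [a [Xa <-]] /mem_img [b [Xb <-]].
by apply/mem_img; exists (m b a); split; [apply: XM|rewrite phiM].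
Qed.

Lemma img_sub X Y : X `<=` Y -> img X \subset img Y.
Proof.
move=> XY; apply/fintype.subsetP => _ /mem_img [g [Xg <-]]; apply/mem_img.
by exists g; split => //; apply: XY.
Qed.

Lemma card_imgT : #|img setT| = k.
Proof.
have -> : img setT = [set phi (sr i) | i : 'I_k].
  apply/setP => σ; apply/idP/idP.
    move=> /mem_img [g [_ <-]]; apply/imsetP; exists (idx g) => //.
    by apply: phi_coset; apply: NL3; apply: idx_spec.
  by move=> /imsetP [i _ ->]; apply: img_phi.
rewrite card_imset ?card_ord // => i j /phi_eqP h.
by apply: val_inj; apply: dis; [exact: ltn_ord|exact: ltn_ord|].
Qed.

Lemma fin_main (p n : nat) (H M : set T) : prime p -> k = (p ^ n)%N ->
  is_subgroup L H -> is_subgroup L M -> M `<=` H -> M <> H ->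
  (forall K, is_subgroup L K -> M `<=` K -> K `<=` H -> K = M \/ K = H) ->
  (forall y, N y -> H y -> M y) ->
  forall h, H h -> M (gp h p).
Proof.
move=> pp kE sH sM MH MneH maxMH NHM h Hh.
have [H1 [HMul HV]] := sH; have [M1 [MMul MV]] := sM.
pose Hb := Group (img_group sH); pose Mb := Group (img_group sM).
have sT : is_subgroup L (@setT T) by [].
pose Tb := Group (img_group sT).
have pT : pgroup p Tb by rewrite /pgroup /= card_imgT kE pnatX pnat_id.
have pH : pgroup p Hb by apply: (pgroupS _ pT); apply: img_sub.
have back : forall g y, M g -> H y -> phi g = phi y -> M y.
  move=> g y Mg Hy E.
  have Ngy := phi_eqP E.
  have Hgy : H (m (iv g) y) by apply: HMul => //; apply: HV; apply: MH.
  have Mgy := NHM _ Ngy Hgy.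
  by rewrite -(LmulKVg L g y); apply: MMul.
have maxM : maximal Mb Hb.
  apply/maxgroupP; split.
    rewrite properE img_sub //=; apply/negP => HM.
    apply: MneH; apply/seteqP; split => // y Hy.
    have /mem_img [g [Mg E]] := fintype.subsetP HM _ (img_phi Hy).
    exact: back Mg Hy E.
  move=> Kb pK MK.
  pose K := [set y | H y /\ phi y \in Kb].
  have sK : is_subgroup L K.
    split; first by split => //; rewrite phi1 group1.
    split.
      move=> a b [Ha Ka] [Hb' Kb']; split; first exact: HMul.
      by rewrite phiM groupM.
    by move=> a [Ha Ka]; split; [exact: HV|rewrite phiV groupV].
  have MK' : M `<=` K.
    move=> y My; split; first exact: MH.
    by apply: (fintype.subsetP MK); apply: img_phi.
  have KH : K `<=` H by move=> y [].
  move: pK; rewrite properE => /andP [KbH NHK].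
  case: (maxMH K sK MK' KH) => [KM|KH'].
    apply/eqP; rewrite finset.eqEsubset MK andbT; apply/fintype.subsetP => σ Kσ.
    have /mem_img [g [Hg E]] := fintype.subsetP KbH _ Kσ.
    have : K g by split => //; rewrite E.
    by rewrite KM => Mg; apply/mem_img; exists g.
  exfalso; move/negP: NHK; apply; apply/fintype.subsetP => σ /mem_img [g [Hg <-]].
  have : K g by rewrite KH'.
  by case.
have x1 : (phi h ^+ p)%g \in Mb.
  apply: (fintype.subsetP (Phi_sub_max maxM)).
  rewrite (Phi_joing pH); apply: (fintype.subsetP (joing_subr _ _)).
  have := Mho_p_elt 1 (img_phi Hh) (mem_p_elt pH (img_phi Hh)).
  by rewrite expn1.
rewrite -phiX in x1; case/mem_img: x1 => g [Mg E].
apply: (back g) => //; exact: subgroup_pow.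
Qed.

End FinPart.


Lemma pow_frattini (p : nat) (T : topologicalType) (L : group_law T) :
  prime p -> pro_p_group L p ->
  forall H h, fg_subgroup L H -> H h -> Frattini L H (gpow L h p).
Proof.
move=> pp [TG cT hT tdT quot] H h [[sH cH] _] Hh.
rewrite /Frattini /=; split; first exact: (subgroup_pow _ sH).
move=> M [sM MH MneH [U [oU MUH]] maxMH].
have Me : M (gone L) by case: sM.
have Ue : U (gone L) by move: Me; rewrite MUH => -[].
have [C [cC Ce CU]] := clopen_nbhs cT hT tdT oU Ue.
have [S [sS oS SC]] := open_subgroup_in TG cT cC Ce.
have [N [sN oN NS]] := normal_core TG cT sS oS.
have [n [s [sz [cov dis]]]] := quot N sN oN.
apply: (fin_main sN cov dis pp (erefl _) sH sM MH MneH maxMH) => // y Ny Hy.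
by rewrite MUH; split => //; apply: CU; apply: SC; apply: NS.
Qed.

Theorem mainTheorem18 (p : nat) (T : topologicalType) (L : group_law T) :
  prime p -> pro_p_group L p ->
  (Frattini_resistant L p <->
   forall H K : set T, fg_subgroup L H -> fg_subgroup L K ->
     Frattini L H `<=` Frattini L K -> H `<=` K).
Proof.
move=> pp pg; split.
  move=> FR H K fgH fgK sub h Hh; apply: (FR K fgK h); apply: sub.
  exact: pow_frattini.
by apply: dir_back => //; case: pg.
Qed.
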